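(* Let $f:\mathbb{R}^n\to\mathbb{R}\cup\{+\infty\}$ be closed and convex, let $X\in\mathbb{R}^{n\times m}$ have rank $r$ with compact SVD $X=U_r\Sigma_r V_r^\top$ ($U_r\in\mathbb{R}^{n\times r}$, $\Sigma_r\in\mathbb{R}^{r\times r}$, $V_r\in\mathbb{R}^{m\times r}$), let $\gamma>0$ and $k\ge 0$. For an integer $q\ge 0$ define $$p_{\rm con}(q)=\min_{w\in\mathbb{R}^m,\ \|w\|_0\le q}\ f(Xw)+\tfrac{\gamma}{2}\|w\|_2^2,$$ and define the relaxation $$p^{**}_{\rm con}(k)=\min_{v\in\mathbb{R}^m,\ u\in[0,1]^m,\ \mathbf 1^\top u\le k}\ f(XD(u)v)+\tfrac{\gamma}{2}v^\top D(u)v .$$ Let $(v^*,u^* )$ be an optimal solution of this relaxation with optimal value $t^*$, let $z^*=\Sigma_rV_r^\top D(u^* )v^*\in\mathbb{R}^r$, let $\ell_i$ denote the $i$-th column of $\Sigma_rV_r^\top$, and let $c\sim\mathcal N(0,I_m)$. Consider the linear program in $u\in\mathbb{R}^m$: $$\min\ c^\top u\quad\text{s.t.}\quad f(U_rz^* )+\sum_{i=1}^m u_i\tfrac{\gamma}{2}(v_i^* )^2=t^*,\quad \sum_{i=1}^m u_i\le k,\quad \sum_{i=1}^m u_i\ell_i v_i^*=z^*,\quad u\in[0,1]^m.$$ Then, with probability one (over $c$), from an optimal basic feasible solution $\bar u$ of this linear program one can construct the point $w=D(\bar u)v^*$ (equivalently, with $S=\{i:\bar u_i\notin\{0,1\}\}$,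 set $\tilde u_i=1,\tilde v_i=\bar u_iv_i^*$ for $i\in S$ and $\tilde u_i=\bar u_i,\tilde v_i=v_i^*$ for $i\notin S$, and $w=D(\tilde u)\tilde v$), which has at most $k+r+2$ nonzero coefficients, and whose objective value $\mathrm{OPT}=f(Xw)+\tfrac{\gamma}{2}\|w\|_2^2$ satisfies $$p_{\rm con}(k+r+2)\le \mathrm{OPT}\le p^{**}_{\rm con}(k)\le p_{\rm con}(k).$$
   Context: $\|w\|_0$ denotes the number of nonzero entries of $w$. For $u\in\mathbb{R}^m$, $D(u)=\mathrm{diag}(u_1,\dots,u_m)$. $\mathbf 1$ is the all-ones vector. A function is closed if it is lower semicontinuous (its epigraph is closed). *)

(* Defs.v *)
From HB Require Import structures.
From mathcomp Require Import all_boot all_order all_algebra.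
From mathcomp Require Import all_classical all_reals all_analysis.
Set Implicit Arguments. Unset Strict Implicit. Unset Printing Implicit Defensive.
Import Order.TTheory GRing.Theory Num.Theory numFieldNormedType.Exports.
Local Open Scope classical_set_scope.
Local Open Scope ring_scope.

Definition l0norm {R : realType} {m : nat} (w : 'cV[R]_m) : nat :=
  #|[set i : 'I_m | w i 0 != 0]|.

(* D(u) v as a vector: entrywise product *)
Definition Dmul {R : realType} {m : nat} (u v : 'cV[R]_m) : 'cV[R]_m :=
  \col_i (u i 0 * v i 0).

Definition sqnorm {R : realType} {m : nat} (w : 'cV[R]_m) : R :=
  \sum_i (w i 0) ^+ 2.

Definition convex_efun {R : realType} {n : nat} (f : 'cV[R]_n -> \bar R) : Prop :=
  forall (x y : 'cV[R]_n) (t : R), 0 <= t -> t <= 1 ->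
    (f (t *: x + (1 - t) *: y)%R <= t%:E * f x + (1 - t)%:E * f y)%E.

Definition epigraph {R : realType} {n : nat} (f : 'cV[R]_n -> \bar R)
  : set ('cV[R]_n * R) := [set p | (f p.1 <= p.2%:E)%E].

Definition closed_efun {R : realType} {n : nat} (f : 'cV[R]_n -> \bar R) : Prop :=
  closed (epigraph f).

Definition p_con {R : realType} {n m : nat} (f : 'cV[R]_n -> \bar R)
  (X : 'M[R]_(n, m)) (gamma : R) (q : nat) : \bar R :=
  ereal_inf [set (f (X *m w) + (gamma / 2 * sqnorm w)%:E)%E
            | w in [set w : 'cV[R]_m | (l0norm w <= q)%N]].

Definition relax_obj {R : realType} {n m : nat} (f : 'cV[R]_n -> \bar R)
  (X : 'M[R]_(n, m)) (gamma : R) (v u : 'cV[R]_m) : \bar R :=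
  (f (X *m Dmul u v) + (gamma / 2 * \sum_i (u i 0 * (v i 0) ^+ 2))%:E)%E.

Definition relax_feasible {R : realType} {m : nat} (k : nat) (u : 'cV[R]_m) : Prop :=
  (forall i, 0 <= u i 0 <= 1) /\ \sum_i u i 0 <= k%:R.

Definition p_relax {R : realType} {n m : nat} (f : 'cV[R]_n -> \bar R)
  (X : 'M[R]_(n, m)) (gamma : R) (k : nat) : \bar R :=
  ereal_inf [set relax_obj f X gamma vu.1 vu.2
            | vu in [set vu : 'cV[R]_m * 'cV[R]_m | relax_feasible k vu.2]].

Definition lp_feasible {R : realType} {n m r : nat} (f : 'cV[R]_n -> \bar R)
  (Ur : 'M[R]_(n, r)) (L : 'M[R]_(r, m)) (gamma : R) (k : nat)
  (vs : 'cV[R]_m) (zs : 'cV[R]_r) (ts : \bar R) (u : 'cV[R]_m) : Prop :=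
  [/\ (f (Ur *m zs) + (\sum_i u i 0 * (gamma / 2 * (vs i 0) ^+ 2))%:E)%E = ts,
      \sum_i u i 0 <= k%:R,
      \sum_i (u i 0 * vs i 0) *: col i L = zs
    & forall i, 0 <= u i 0 <= 1].

(* Basic feasible solution: u is feasible and among the constraint rows active
   at u (equality constraints are always active) there are m linearly
   independent ones, i.e. the matrix of active constraint rows (inactive rows
   replaced by 0) has rank m. *)
Definition lp_active_rows {R : realType} {m r : nat} (L : 'M[R]_(r, m))
  (gamma : R) (k : nat) (vs : 'cV[R]_m) (u : 'cV[R]_m) : 'M[R]_(1 + 1 + (r + m), m) :=
  col_mx (col_mx (\row_i (gamma / 2 * (vs i 0) ^+ 2))
                 (if \sum_i u i 0 == k%:R then const_mx 1 else 0))
         (col_mx (L *m diag_mx (vs^T))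
                 (diag_mx (\row_i ((u i 0 == 0) || (u i 0 == 1))%:R))).

Definition lp_bfs {R : realType} {n m r : nat} (f : 'cV[R]_n -> \bar R)
  (Ur : 'M[R]_(n, r)) (L : 'M[R]_(r, m)) (gamma : R) (k : nat)
  (vs : 'cV[R]_m) (zs : 'cV[R]_r) (ts : \bar R) (u : 'cV[R]_m) : Prop :=
  lp_feasible f Ur L gamma k vs zs ts u /\
  \rank (lp_active_rows L gamma k vs u) = m.

Definition lp_optimal {R : realType} {n m r : nat} (f : 'cV[R]_n -> \bar R)
  (Ur : 'M[R]_(n, r)) (L : 'M[R]_(r, m)) (gamma : R) (k : nat)
  (vs : 'cV[R]_m) (zs : 'cV[R]_r) (ts : \bar R) (c u : 'cV[R]_m) : Prop :=
  lp_feasible f Ur L gamma k vs zs ts u /\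
  forall u', lp_feasible f Ur L gamma k vs zs ts u' ->
    \sum_i c i 0 * u i 0 <= \sum_i c i 0 * u' i 0.

(* Main.v *)
Require Import Defs.
From HB Require Import structures.
From mathcomp Require Import all_boot all_order all_algebra.
From mathcomp Require Import all_classical all_reals all_analysis.
From mathcomp Require Import ring lra zify.
Import Order.TTheory GRing.Theory Num.Theory.
Local Open Scope classical_set_scope.
Local Open Scope ring_scope.

Set Implicit Arguments. Unset Strict Implicit. Unset Printing Implicit Defensive.

Definition feasA {R : realFieldType} {m r : nat} (P : R -> Prop) (a : 'rV[R]_m)
  (kR : R) (LD : 'M[R]_(r, m)) (zs : 'cV[R]_r) (u : 'cV[R]_m) : Prop :=
  [/\ P (\sum_i u i 0 * a 0 i), \sum_i u i 0 <= kR, LD *m u = zs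
    & forall i, 0 <= u i 0 <= 1].

Definition MbA {R : realFieldType} {m r : nat} (b : bool) (a : 'rV[R]_m)
  (kR : R) (LD : 'M[R]_(r, m)) (u : 'cV[R]_m) : 'M[R]_(1 + 1 + (r + m), m) :=
  col_mx (col_mx (if b then a else 0)
                 (if \sum_i u i 0 == kR then const_mx 1 else 0))
         (col_mx LD (diag_mx (\row_i ((u i 0 == 0) || (u i 0 == 1))%:R))).

Lemma rowmul_eq0 {R : realFieldType} {m : nat} (a : 'rV[R]_m) (d : 'cV[R]_m) :
  (a *m d == 0) = (\sum_i d i 0 * a 0 i == 0).
Proof.
apply/eqP/eqP => H.
  have := congr1 (fun M : 'M[R]_(1, 1) => M 0 0) H; rewrite !mxE => H0; rewrite -[X in _ = X]H0.
  by apply: eq_bigr => i _; rewrite mulrC.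
apply/matrixP => i j; rewrite !ord1 !mxE -[RHS]H.
by apply: eq_bigr => l _; rewrite mulrC.
Qed.

Lemma MbA_ker {R : realFieldType} {m r : nat} b (a : 'rV[R]_m) kR
   (LD : 'M[R]_(r, m)) (u d : 'cV[R]_m) :
  MbA b a kR LD u *m d = 0 <->
  [/\ b -> \sum_i d i 0 * a 0 i = 0,
      \sum_i u i 0 == kR -> \sum_i d i 0 = 0,
      LD *m d = 0
    & forall i, (u i 0 == 0) || (u i 0 == 1) -> d i 0 = 0].
Proof.
have Hc : forall d' : 'cV[R]_m, (const_mx 1 : 'rV[R]_m) *m d' == 0 = (\sum_i d' i 0 == 0).
  by move=> d'; rewrite rowmul_eq0; under eq_bigr do rewrite mxE mulr1.
have Hd : forall d' : 'cV[R]_m, (diag_mx (\row_(i < m) ((u i 0 == 0) || (u i 0 == 1))%:R) *m d' == 0 :> 'cV[R]_m)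
   <-> (forall i, (u i 0 == 0) || (u i 0 == 1) -> d' i 0 = 0).
  move=> d'; rewrite mul_diag_mx; split.
    move/eqP/matrixP => H i Hi; have := H i 0; rewrite !mxE Hi mul1r => ->; done.
  move=> H; apply/eqP/matrixP => i j; rewrite !ord1 !mxE.
  by case Hi: ((u i 0 == 0) || (u i 0 == 1)); [rewrite H // mulr0 | rewrite mul0r].
rewrite /MbA !mul_col_mx; split.
  move/eqP; rewrite !col_mx_eq0 => /andP[/andP[H1 H2] /andP[H3 H4]].
  split.
  - by move=> hb; move: H1; rewrite hb rowmul_eq0 => /eqP.
  - by move=> hs; move: H2; rewrite hs Hc => /eqP.
  - exact/eqP.
  - by apply/Hd.
case=> H1 H2 H3 H4; apply/eqP; rewrite !col_mx_eq0; apply/andP; split; apply/andP; split.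
- by case: b H1 => [H1|_]; [rewrite rowmul_eq0 H1 | rewrite mul0mx].
- by case: eqP H2 => [e H2|_ _]; [rewrite Hc H2 | rewrite mul0mx].
- by rewrite H3.
- exact/Hd.
Qed.

Lemma ker_exists {R : fieldType} {p m : nat} (M : 'M[R]_(p, m)) :
  (\rank M < m)%N -> exists2 d : 'cV[R]_m, d != 0 & M *m d = 0.
Proof.
move=> Hr.
set K := kermx M^T.
have HK : K != 0.
  apply/eqP => HK0; have := mxrank_ker M^T; rewrite -/K HK0 mxrank0 mxrank_tr.
  by move=> /esym/eqP; rewrite subn_eq0 leqNgt Hr.
have [i Hi] : exists i, row i K != 0.
  apply/existsP; apply: contraR HK; rewrite negb_exists => /forallP H.
  apply/eqP/row_matrixP => i; rewrite row0; exact/eqP/negPn/H.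
exists (row i K)^T; first by rewrite trmx_eq0.
by rewrite -[M]trmxK -trmx_mul -row_mul mulmx_ker row0 trmx0.
Qed.

Lemma ker_full {R : fieldType} {p m : nat} (M : 'M[R]_(p, m)) (d : 'cV[R]_m) :
  \rank M = m -> M *m d = 0 -> d = 0.
Proof.
move=> Hr Hd.
have Hf : row_free M^T by rewrite /row_free mxrank_tr Hr.
have : d^T *m M^T = 0 *m M^T by rewrite -trmx_mul Hd trmx0 mul0mx.
by move/(row_free_inj Hf)/eqP; rewrite trmx_eq0 => /eqP.
Qed.

Lemma sub_colmxl {R : fieldType} {m1 m2 n : nat} (A : 'M[R]_(m1, n)) (B : 'M[R]_(m2, n)) :
  (A <= col_mx A B)%MS.
Proof. by have := submx_refl (col_mx A B); rewrite col_mx_sub => /andP[]. Qed.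

Lemma sub_colmxr {R : fieldType} {m1 m2 n : nat} (A : 'M[R]_(m1, n)) (B : 'M[R]_(m2, n)) :
  (B <= col_mx A B)%MS.
Proof. by have := submx_refl (col_mx A B); rewrite col_mx_sub => /andP[]. Qed.

Lemma MbA_sub {R : realFieldType} {m r : nat} (b b' : bool) (a : 'rV[R]_m) (kR : R)
   (LD : 'M[R]_(r, m)) (u u' : 'cV[R]_m) :
  (b -> b') -> (\sum_i u i 0 == kR -> \sum_i u' i 0 == kR) ->
  (forall i, (u i 0 == 0) || (u i 0 == 1) -> (u' i 0 == 0) || (u' i 0 == 1)) ->
  (MbA b a kR LD u <= MbA b' a kR LD u')%MS.
Proof.
move=> Hb Hs Hf; rewrite /MbA !col_mx_sub.
set B1 := (X in col_mx (col_mx X _) _).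
set B2 := (X in col_mx (col_mx _ X) _).
set B4 := (X in col_mx (col_mx _ _) (col_mx _ X)).
have T1 : forall (q : nat) (C : 'M[R]_(q, m)), (C <= B1)%MS -> (C <= col_mx (col_mx B1 B2) (col_mx LD B4))%MS.
  by move=> q C H; apply: (submx_trans H); apply: (submx_trans (sub_colmxl _ B2)); apply: sub_colmxl.
have T2 : forall (q : nat) (C : 'M[R]_(q, m)), (C <= B2)%MS -> (C <= col_mx (col_mx B1 B2) (col_mx LD B4))%MS.
  by move=> q C H; apply: (submx_trans H); apply: (submx_trans (sub_colmxr B1 _)); apply: sub_colmxl.
have T3 : forall (q : nat) (C : 'M[R]_(q, m)), (C <= LD)%MS -> (C <= col_mx (col_mx B1 B2) (col_mx LD B4))%MS.
  by move=> q C H; apply: (submx_trans H); apply: (submx_trans (sub_colmxl _ B4)); apply: sub_colmxr.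
have T4 : forall (q : nat) (C : 'M[R]_(q, m)), (C <= B4)%MS -> (C <= col_mx (col_mx B1 B2) (col_mx LD B4))%MS.
  by move=> q C H; apply: (submx_trans H); apply: (submx_trans (sub_colmxr LD _)); apply: sub_colmxr.
apply/andP; split; apply/andP; split.
- apply: T1; rewrite /B1; case: b Hb => [->//|_]; by rewrite sub0mx.
- apply: T2; rewrite /B2; case: eqP Hs => [_ ->//|_ _]; by rewrite sub0mx.
- exact: T3.
- apply: T4; rewrite /B4.
  set d1 := (\row_i _ : 'rV[R]_m). set d2 := (\row_i _ : 'rV[R]_m).
  have -> : diag_mx d1 = diag_mx d1 *m diag_mx d2.
    rewrite mulmx_diag; congr diag_mx; apply/rowP => i; rewrite !mxE.
    by case E: ((u i 0 == 0) || (u i 0 == 1)); [rewrite (Hf i E) mulr1 | rewrite mul0r].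
  exact: submxMl.
Qed.

Lemma sum_upd {R : realFieldType} {m : nat} (u d : 'cV[R]_m) (t : R) (w : 'I_m -> R) :
  \sum_i (u + t *: d) i 0 * w i = \sum_i u i 0 * w i + t * \sum_i d i 0 * w i.
Proof. by rewrite mulr_sumr -big_split; apply: eq_bigr => i _; rewrite !mxE mulrDl mulrA. Qed.

Lemma sum_upd1 {R : realFieldType} {m : nat} (u d : 'cV[R]_m) (t : R) :
  \sum_i (u + t *: d) i 0 = \sum_i u i 0 + t * \sum_i d i 0.
Proof. by rewrite mulr_sumr -big_split; apply: eq_bigr => i _; rewrite !mxE. Qed.

Lemma sum_updc {R : realFieldType} {m : nat} (u d c : 'cV[R]_m) (t : R) :
  \sum_i c i 0 * (u + t *: d) i 0 = \sum_i c i 0 * u i 0 + t * \sum_i c i 0 * d i 0.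
Proof. by rewrite mulr_sumr -big_split; apply: eq_bigr => i _; rewrite !mxE mulrDr mulrCA. Qed.

Lemma purify_step {R : realFieldType} {m r : nat} (P : R -> Prop) (b : bool)
  (a : 'rV[R]_m) (kR : R) (LD : 'M[R]_(r, m)) (zs : 'cV[R]_r) (c u d : 'cV[R]_m) :
  (~~ b -> forall x y, P x -> P y) ->
  feasA P a kR LD zs u -> d != 0 -> MbA b a kR LD u *m d = 0 ->
  \sum_i c i 0 * d i 0 <= 0 ->
  exists u', [/\ feasA P a kR LD zs u',
     \sum_i c i 0 * u' i 0 <= \sum_i c i 0 * u i 0
   & (\rank (MbA b a kR LD u) < \rank (MbA b a kR LD u'))%N].
Proof.
move=> HPc Hu Hd0 Hd Hcd.
have [Hda Hds HdL Hdf] := (MbA_ker b a kR LD u d).1 Hd.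
case: Hu => HP Hs HL Hb.
have [i0 Hi0] : exists i0, d i0 0 != 0.
  apply/existsP; apply: contraR Hd0; rewrite negb_exists => /forallP H.
  apply/eqP/matrixP => i j; rewrite ord1 mxE; exact/eqP/negPn/H.
pose valid := fun j : option 'I_m => if j is Some i then d i 0 != 0 else 0 < \sum_i d i 0.
pose ratio := fun j : option 'I_m => if j is Some i then
   (if 0 < d i 0 then (1 - u i 0) / d i 0 else u i 0 / (- d i 0))
   else (kR - \sum_i u i 0) / \sum_i d i 0.
have Hv0 : valid (Some i0) by [].
case: (arg_minP ratio Hv0) => jst Hvj Hmin.
have Hsd : forall i, d i 0 != 0 -> d i 0 < 0 \/ 0 < d i 0.
  by move=> i Hi; case: (ltgtP (d i 0) 0) => H; [left|right|move: Hi; rewrite H eqxx].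
have Hr0 : forall j, valid j -> 0 <= ratio j.
  case=> [i|] /= Hv.
    have [H1 H2] := andP (Hb i).
    case: ifP => Hp; apply: divr_ge0; rewrite ?subr_ge0 //.
      by apply: ltW.
    by case: (Hsd i Hv) => H; [rewrite oppr_ge0 ltW | rewrite H in Hp].
  by apply: divr_ge0; rewrite ?subr_ge0 // ltW.
have [t Ht] : exists t, t = ratio jst by exists (ratio jst).
have Ht0 : 0 <= t by rewrite Ht; apply: Hr0.
pose u' := u + t *: d.
have Hu'i : forall i, u' i 0 = u i 0 + t * d i 0 by move=> i; rewrite !mxE.
have Hfeas : feasA P a kR LD zs u'.
  split.
  - case Eb: b.
      by rewrite sum_upd Hda // mulr0 addr0.
    by apply: (HPc (negbT Eb) _ _ HP).
  - rewrite sum_upd1; case: (ltrP 0 (\sum_i d i 0)) => Hp.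
      have := Hmin None Hp; rewrite /= -Ht ler_pdivlMr //; lra.
    have : t * \sum_i d i 0 <= 0 by rewrite mulr_ge0_le0.
    lra.
  - by rewrite /u' mulmxDr -scalemxAr HdL scaler0 addr0.
  - move=> i; rewrite Hu'i; have [H1 H2] := andP (Hb i).
    case: (eqVneq (d i 0) 0) => Hdi; first by rewrite Hdi mulr0 addr0 H1 H2.
    have := Hmin (Some i) Hdi; rewrite /= -Ht.
    case: (Hsd i Hdi) => Hs'.
      rewrite ltNge (ltW Hs') /= ler_pdivlMr ?oppr_gt0 // mulrN.
      have : t * d i 0 <= 0 by rewrite mulr_ge0_le0 // ltW.
      move=> ? ?; apply/andP; split; lra.
    rewrite Hs' ler_pdivlMr //.
    have : 0 <= t * d i 0 by rewrite mulr_ge0 // ltW.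
    move=> ? ?; apply/andP; split; lra.
exists u'; split => //.
  rewrite sum_updc.
  have : t * \sum_i c i 0 * d i 0 <= 0 by rewrite mulr_ge0_le0.
  lra.
have Hsub : (MbA b a kR LD u <= MbA b a kR LD u')%MS.
  apply: MbA_sub => //.
    by move=> /[dup] /Hds Hz; rewrite sum_upd1 Hz mulr0 addr0.
  by move=> i /[dup] /Hdf Hz; rewrite Hu'i Hz mulr0 addr0.
have Hnz : MbA b a kR LD u' *m d != 0.
  apply/eqP => /(MbA_ker b a kR LD u' d) [_ Hds' _ Hdf'].
  case: jst Hvj Ht {Hmin} => [i|] /= Hv Ht.
    apply: (negP Hv); apply/eqP; apply: Hdf'; rewrite Hu'i Ht.
    case: ifP => Hp.
      by rewrite divfK // subrKC eqxx orbT.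
    have Hn : - d i 0 != 0 by rewrite oppr_eq0.
    by rewrite invrN mulrN mulNr divfK // subrr eqxx.
  have : \sum_i d i 0 = 0.
    apply: Hds'; rewrite sum_upd1 Ht divfK ?subrKC //; by rewrite gt_eqF.
  by move=> H; rewrite H ltxx in Hv.
have [Hle Heq] := mxrank_leqif_sup Hsub.
rewrite ltn_neqAle Hle andbT Heq.
apply: contra Hnz => /submxP [D ->].
by rewrite -mulmxA Hd mulmx0.
Qed.

Lemma purify {R : realFieldType} {m r : nat} (P : R -> Prop) (b : bool)
  (a : 'rV[R]_m) (kR : R) (LD : 'M[R]_(r, m)) (zs : 'cV[R]_r) (c u : 'cV[R]_m) :
  (~~ b -> forall x y, P x -> P y) ->
  feasA P a kR LD zs u ->
  exists u', [/\ feasA P a kR LD zs u',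
     \sum_i c i 0 * u' i 0 <= \sum_i c i 0 * u i 0
   & \rank (MbA b a kR LD u') = m].
Proof.
move=> HPc.
have [n Hn] : exists n, (m - \rank (MbA b a kR LD u) <= n)%N by exists (m - \rank (MbA b a kR LD u))%N.
elim: n u Hn => [|n IH] u Hn Hu.
  exists u; split => //; apply/eqP; rewrite eqn_leq rank_leq_col /=.
  by rewrite -subn_eq0 -leqn0.
case: (ltnP (\rank (MbA b a kR LD u)) m) => Hlt; last first.
  by exists u; split => //; apply/eqP; rewrite eqn_leq rank_leq_col.
have [d Hd0 Hd] := ker_exists Hlt.
have [d' [Hd0' Hd' Hcd']] : exists d' : 'cV[R]_m, [/\ d' != 0, MbA b a kR LD u *m d' = 0 &
    \sum_i c i 0 * d' i 0 <= 0].
  case: (lerP (\sum_i c i 0 * d i 0) 0) => Hc.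
    by exists d.
  exists (- d); split; first by rewrite oppr_eq0.
    by rewrite mulmxN Hd oppr0.
  have -> : \sum_i c i 0 * (- d) i 0 = - \sum_i c i 0 * d i 0.
    by rewrite -sumrN; apply: eq_bigr => i _; rewrite mxE mulrN.
  by rewrite oppr_le0 ltW.
have [u1 [Hu1 Hc1 Hr1]] := purify_step HPc Hu Hd0' Hd' Hcd'.
have Hn1 : (m - \rank (MbA b a kR LD u1) <= n)%N.
  have := rank_leq_col (MbA b a kR LD u1); move: Hn Hr1 Hlt. lia.
have [u2 [Hu2 Hc2 Hr2]] := IH u1 Hn1 Hu1.
exists u2; split => //; exact: le_trans Hc2 Hc1.
Qed.

Definition patA {R : realFieldType} {m : nat} (kR : R) (u : 'cV[R]_m) :
  {ffun 'I_m -> option bool} * bool :=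
  ([ffun i => if u i 0 == 0 then Some false else if u i 0 == 1 then Some true else None],
   \sum_i u i 0 == kR).

Lemma flag_pat {R : realFieldType} {m : nat} (kR : R) (u : 'cV[R]_m) i :
  ((u i 0 == 0) || (u i 0 == 1)) = ((patA kR u).1 i != None).
Proof. by rewrite /patA /= ffunE; case: eqP => //=; case: eqP. Qed.

Lemma pat_val {R : realFieldType} {m : nat} (kR : R) (u : 'cV[R]_m) i bb :
  (patA kR u).1 i = Some bb -> u i 0 = bb%:R.
Proof.
rewrite /patA /= ffunE; case: eqP => [-> [<-]//|_]; case: eqP => [-> [<-]//|_]//.
Qed.

Lemma uniq_vertex {R : realFieldType} {m r : nat} (P : R -> Prop) (b : bool)
  (a : 'rV[R]_m) (kR : R) (LD : 'M[R]_(r, m)) (zs : 'cV[R]_r) (u u' : 'cV[R]_m) :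
  (b -> forall x y, P x -> P y -> x = y) ->
  feasA P a kR LD zs u -> feasA P a kR LD zs u' -> patA kR u = patA kR u' ->
  \rank (MbA b a kR LD u) = m -> u = u'.
Proof.
move=> HPu [HP Hs HL Hb] [HP' Hs' HL' Hb'] Hpat Hr.
have Hs2 : (\sum_i u i 0 == kR) = (\sum_i u' i 0 == kR) by have := congr1 snd Hpat.
have HM : MbA b a kR LD u = MbA b a kR LD u'.
  rewrite /MbA Hs2; congr (col_mx _ (col_mx _ (diag_mx _))).
  by apply/rowP => i; rewrite !mxE !(flag_pat kR) Hpat.
apply/eqP; rewrite -subr_eq0; apply/eqP; apply: (ker_full Hr).
apply/MbA_ker; split.
- move=> Hbb; have := HPu Hbb _ _ HP HP'.
  have -> : \sum_i (u - u') i 0 * a 0 i = \sum_i u i 0 * a 0 i - \sum_i u' i 0 * a 0 i.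
    by rewrite -sumrB; apply: eq_bigr => i _; rewrite !mxE mulrBl.
  by move=> ->; rewrite subrr.
- move=> Hsu; have Hsu' := Hsu; rewrite Hs2 in Hsu'.
  have -> : \sum_i (u - u') i 0 = \sum_i u i 0 - \sum_i u' i 0.
    by rewrite -sumrB; apply: eq_bigr => i _; rewrite !mxE.
  by rewrite (eqP Hsu) (eqP Hsu') subrr.
- by rewrite mulmxBr HL HL' subrr.
- move=> i; rewrite (flag_pat kR) !mxE.
  case E: ((patA kR u).1 i) => [bb|] // _.
  have E' : (patA kR u').1 i = Some bb by rewrite -Hpat.
  by rewrite (pat_val E) (pat_val E') subrr.
Qed.

Lemma exists_opt_vertex {R : realFieldType} {m r : nat} (P : R -> Prop) (b : bool)
  (a : 'rV[R]_m) (kR : R) (LD : 'M[R]_(r, m)) (zs : 'cV[R]_r) (c u0 : 'cV[R]_m) :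
  (~~ b -> forall x y, P x -> P y) ->
  (b -> forall x y, P x -> P y -> x = y) ->
  feasA P a kR LD zs u0 ->
  exists ub, [/\ feasA P a kR LD zs ub, \rank (MbA b a kR LD ub) = m &
    forall u', feasA P a kR LD zs u' ->
      \sum_i c i 0 * ub i 0 <= \sum_i c i 0 * u' i 0].
Proof.
move=> HPc HPu Hu0.
pose V := fun p => (fun u => feasA P a kR LD zs u /\ \rank (MbA b a kR LD u) = m
                           /\ patA kR u = p) : set 'cV[R]_m.
pose Q := fun p => `[< exists u, V p u >].
pose vert := fun p => xget 0 (V p).
have HV : forall p, Q p -> V p (vert p).
  by move=> p /asboolP Hp; apply: xgetPex.
have [u1 [Hf1 _ Hr1]] := purify c HPc Hu0.
have HQ1 : Q (patA kR u1) by apply/asboolP; exists u1.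
case: (arg_minP (fun p => \sum_i c i 0 * vert p i 0) HQ1) => pb Hpb Hmin.
have [Hfb [Hrb _]] := HV pb Hpb.
exists (vert pb); split => // u' Hu'.
have [u2 [Hf2 Hc2 Hr2]] := purify c HPc Hu'.
have HQ2 : Q (patA kR u2) by apply/asboolP; exists u2.
have [Hf3 [Hr3 Hp3]] := HV _ HQ2.
have E : vert (patA kR u2) = u2 by apply: (uniq_vertex HPu Hf3 Hf2 Hp3 Hr3).
apply: le_trans (Hmin _ HQ2) _; rewrite E; exact: Hc2.
Qed.

Lemma LD_Dmul {R : realType} {m r : nat} (L : 'M[R]_(r, m)) (vs u : 'cV[R]_m) :
  L *m diag_mx vs^T *m u = L *m Dmul u vs.
Proof.
rewrite -mulmxA mul_diag_mx; congr (_ *m _); apply/matrixP => i j.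
by rewrite !mxE ord1 mulrC.
Qed.

Lemma sumcol_mul {R : realType} {m r : nat} (L : 'M[R]_(r, m)) (w : 'cV[R]_m) :
  \sum_i (w i 0) *: col i L = L *m w.
Proof.
apply/matrixP => x y; rewrite ord1 summxE !mxE; apply: eq_bigr => i _.
by rewrite !mxE mulrC.
Qed.

Lemma lpfeas_iff {R : realType} {n m r : nat} (f : 'cV[R]_n -> \bar R)
  (Ur : 'M[R]_(n, r)) (L : 'M[R]_(r, m)) (gamma : R) (k : nat)
  (vs : 'cV[R]_m) (zs : 'cV[R]_r) (ts : \bar R) (u : 'cV[R]_m) :
  lp_feasible f Ur L gamma k vs zs ts u <->
  feasA (fun x => (f (Ur *m zs) + x%:E = ts)%E) (\row_i (gamma / 2 * (vs i 0) ^+ 2))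
        k%:R (L *m diag_mx vs^T) zs u.
Proof.
have E1 : \sum_i u i 0 * (gamma / 2 * vs i 0 ^+ 2) =
          \sum_i u i 0 * (\row_i (gamma / 2 * (vs i 0) ^+ 2)) 0 i.
  by apply: eq_bigr => i _; rewrite mxE.
have E3 : \sum_i (u i 0 * vs i 0) *: col i L = L *m diag_mx vs^T *m u.
  rewrite LD_Dmul -sumcol_mul; apply: eq_bigr => i _; by rewrite mxE.
rewrite /lp_feasible /feasA E1 E3; split; by case.
Qed.

Lemma active_MbA {R : realType} {m r : nat} (L : 'M[R]_(r, m)) (gamma : R) (k : nat)
  (vs u : 'cV[R]_m) :
  lp_active_rows L gamma k vs u =
  MbA true (\row_i (gamma / 2 * (vs i 0) ^+ 2)) k%:R (L *m diag_mx vs^T) u.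
Proof. by []. Qed.

Lemma rank_col_le {R : fieldType} {m1 m2 n : nat} (A : 'M[R]_(m1, n)) (B : 'M[R]_(m2, n)) :
  (\rank (col_mx A B) <= \rank A + \rank B)%N.
Proof.
have -> : col_mx A B = col_mx A 0 + col_mx 0 B by rewrite add_col_mx addr0 add0r.
by apply: leq_trans (mxrank_add _ _) _; rewrite rank_col_mx0 rank_col_0mx.
Qed.

Lemma rank_diag_le {R : fieldType} {m : nat} (d : 'rV[R]_m) :
  (\rank (diag_mx d) <= #|[set i : 'I_m | (d 0 i != 0)%R]|)%N.
Proof.
rewrite diag_mx_sum_delta -sum1_card [X in (_ <= X)%N]big_mkcond /=.
apply: (big_ind2 (fun (M : 'M[R]_m) (x : nat) => (\rank M <= x)%N)).
- by rewrite mxrank0.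
- move=> M1 x1 M2 x2 H1 H2; apply: leq_trans (mxrank_add _ _) _; exact: leq_add.
move=> i _; rewrite unfold_in /= asboolb; case: eqP => [->|_]; first by rewrite scale0r mxrank0.
by apply: leq_trans (mxrankS (scalemx_sub _ (submx_refl _))) _; rewrite mxrank_delta.
Qed.

Lemma card_cset {m : nat} (P : 'I_m -> bool) :
  #|[set i : 'I_m | P i]| = (\sum_i (P i : nat))%N.
Proof.
rewrite -sum1_card big_mkcond /=; apply: eq_bigr => i _.
by rewrite unfold_in /= asboolb; case: (P i).
Qed.

Lemma sum_ord1 (m : nat) : (\sum_(i < m) 1)%N = m.
Proof. by rewrite big_const_ord iter_addn_0 mul1n. Qed.

Unset Implicit Arguments.

Theorem theorem2p1 (R : realType) (n m r : nat)
  (f : 'cV[R]_n -> \bar R)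
  (Hf_nonninfty : forall x, f x != -oo%E)
  (Hf_convex : convex_efun f) (Hf_closed : closed_efun f)
  (X : 'M[R]_(n, m)) (Hrank : \rank X = r)
  (Ur : 'M[R]_(n, r)) (s : 'rV[R]_r) (Vr : 'M[R]_(m, r))
  (Hs_pos : forall j, 0 < s 0 j)
  (HU : Ur^T *m Ur = 1%:M) (HV : Vr^T *m Vr = 1%:M)
  (HX : X = Ur *m diag_mx s *m Vr^T)
  (gamma : R) (Hgamma : 0 < gamma) (k : nat)
  (vs us : 'cV[R]_m) (ts : \bar R)
  (Hus : relax_feasible k us)
  (Hts : ts = relax_obj f X gamma vs us)
  (Hopt : forall v u, relax_feasible k u -> (ts <= relax_obj f X gamma v u)%E) :
  let L := diag_mx s *m Vr^T in
  let zs := L *m Dmul us vs in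
  forall c : 'cV[R]_m,
    (exists ub, lp_optimal f Ur L gamma k vs zs ts c ub /\
                lp_bfs f Ur L gamma k vs zs ts ub) /\
    (forall ub, lp_optimal f Ur L gamma k vs zs ts c ub ->
                lp_bfs f Ur L gamma k vs zs ts ub ->
      let w := Dmul ub vs in
      let OPT := (f (X *m w) + (gamma / 2 * sqnorm w)%:E)%E in
      [/\ (l0norm w <= k + r + 2)%N,
          (p_con f X gamma (k + r + 2) <= OPT)%E,
          (OPT <= p_relax f X gamma k)%E
        & (p_relax f X gamma k <= p_con f X gamma k)%E]).
Proof.
move=> L zs c.
pose a : 'rV[R]_m := \row_i (gamma / 2 * (vs i 0) ^+ 2).
pose LD := L *m diag_mx vs^T.
pose P := fun x : R => (f (Ur *m zs) + x%:E = ts)%E.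
pose b := f (Ur *m zs) \is a fin_num.
have HXw : forall w : 'cV[R]_m, X *m w = Ur *m (L *m w).
  by move=> w; rewrite HX /L !mulmxA.
have HPc : ~~ b -> forall x y, P x -> P y.
  move=> Hb x y; rewrite /P.
  have Hinf : f (Ur *m zs) = +oo%E.
    by move: Hb (Hf_nonninfty (Ur *m zs)); rewrite /b fin_numE; case: (f _).
  by rewrite Hinf.
have HPu : b -> forall x y, P x -> P y -> x = y.
  move=> Hb x y; rewrite /P -(fineK Hb) => Hx Hy.
  apply: (addrI (fine (f (Ur *m zs)))); apply: EFin_inj; by rewrite !EFinD Hx Hy.
have Hfus : feasA P a k%:R LD zs us.
  case: Hus => Hb01 Hsum; split => //.
  - rewrite /P Hts /relax_obj HXw; congr (_ + _%:E)%E.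
    by rewrite mulr_sumr; apply: eq_bigr => i _; rewrite mxE; ring.
  - by rewrite /LD LD_Dmul.
have [ub0 [Hf0 Hr0 Hopt0]] := exists_opt_vertex c HPc HPu Hfus.
have rank_act : forall u, \rank (MbA b a k%:R LD u) = m ->
    \rank (lp_active_rows L gamma k vs u) = m.
  move=> u Hr; rewrite active_MbA; apply/eqP; rewrite eqn_leq rank_leq_col -{1}Hr.
  by apply: mxrankS; apply: MbA_sub.
split.
  exists ub0; split; split.
  - exact/lpfeas_iff.
  - by move=> u' /lpfeas_iff; exact: Hopt0.
  - exact/lpfeas_iff.
  - exact: rank_act.
move=> ub [Hfub _] [_ Hrk] w OPT.
have [HP1 Hs1 HL1 Hb1] := (lpfeas_iff f Ur L gamma k vs zs ts ub).1 Hfub.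
have HXw_ub : X *m w = Ur *m zs by rewrite HXw -LD_Dmul HL1.
have Hts_le : (ts <= p_relax f X gamma k)%E.
  by apply/ereal_infP => y [[v u] /= Hu <-]; exact: Hopt.
have HOPT : (OPT <= ts)%E.
  rewrite /OPT HXw_ub -HP1; apply: leeD2l; rewrite lee_fin /sqnorm mulr_sumr.
  apply: ler_sum => i _; rewrite !mxE.
  have /andP[h0 h1] := Hb1 i.
  have hg : 0 <= gamma / 2 * vs i 0 ^+ 2 by rewrite mulr_ge0 ?sqr_ge0 // divr_ge0 // ltW.
  have -> : gamma / 2 * (ub i 0 * vs i 0) ^+ 2 = (ub i 0 * ub i 0) * (gamma / 2 * vs i 0 ^+ 2) by ring.
  by rewrite ler_wpM2r // ler_piMr.
have Hl0 : (l0norm w <= k + r + 2)%N.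
  rewrite /l0norm card_cset.
  pose fl := fun i => (ub i 0 == 0) || (ub i 0 == 1).
  have Hm : (m <= 2 + r + \sum_i (fl i : nat))%N.
    rewrite -{1}Hrk /lp_active_rows.
    apply: leq_trans (rank_col_le _ _) _.
    have H1 := rank_col_le (\row_i (gamma / 2 * (vs i 0) ^+ 2))
        (if \sum_i ub i 0 == k%:R then const_mx 1 else 0 : 'M[R]_(1, m)).
    have H2 := rank_col_le (L *m diag_mx vs^T)
        (diag_mx (\row_i ((ub i 0 == 0) || (ub i 0 == 1))%:R)).
    have H3 := rank_leq_row (\row_i (gamma / 2 * (vs i 0) ^+ 2)).
    have H4 := rank_leq_row (if \sum_i ub i 0 == k%:R then const_mx 1 else 0 : 'M[R]_(1, m)).
    have H5 := rank_leq_row (L *m diag_mx vs^T).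
    have H6 := rank_diag_le (\row_i ((ub i 0 == 0) || (ub i 0 == 1))%:R : 'rV[R]_m).
    have E6 : #|[set i : 'I_m | ((\row_i ((ub i 0 == 0) || (ub i 0 == 1))%:R : 'rV[R]_m) 0 i != 0)%R]|
       = (\sum_i (fl i : nat))%N.
      rewrite card_cset; apply: eq_bigr => i _; rewrite mxE /fl.
      by case: ((ub i 0 == 0) || (ub i 0 == 1)); rewrite ?oner_eq0 ?eqxx.
    rewrite E6 in H6.
    apply: leq_trans (leq_add H1 H2) _.
    apply: leq_trans (leq_add (leq_add H3 H4) (leq_add H5 H6)) _.
    by rewrite addnA.
  have Ho : (\sum_i ((ub i 0 == 1)%R : nat) <= k)%N.
    rewrite -(ler_nat R) natr_sum; apply: le_trans Hs1; apply: ler_sum => i _.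
    have /andP[h0 h1] := Hb1 i.
    by case: eqP => [->|_] //=.
  have Hsp : (\sum_i (fl i : nat) + \sum_i (~~ fl i : nat))%N = m.
    rewrite -big_split /= -[RHS]sum_ord1; apply: eq_bigr => i _; by case: (fl i).
  have Hw : (\sum_i ((w i 0 != 0)%R : nat) <=
             \sum_i (~~ fl i : nat) + \sum_i ((ub i 0 == 1)%R : nat))%N.
    rewrite -big_split; apply: leq_sum => i _; rewrite /w /Dmul mxE /fl.
    case: (ub i 0 =P 0) => [->|_]; first by rewrite mul0r eqxx.
    by case: (ub i 0 =P 1) => _ /=; case: (_ != 0).
  lia.
split => //.
- apply: ge_ereal_inf; exists OPT => //; exists w => //=.
- exact: le_trans HOPT Hts_le.
- apply/ereal_infP => y [w0 /= Hw0 <-].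
  pose u := \col_(i < m) ((w0 i 0 != 0)%:R : R).
  apply: ge_ereal_inf; exists (relax_obj f X gamma w0 u); last first.
    rewrite /relax_obj.
    have -> : Dmul u w0 = w0.
      apply/matrixP => i j; rewrite ord1 !mxE.
      by case: (eqVneq (w0 i 0) 0) => [->|H]; [rewrite mulr0 | rewrite mul1r].
    rewrite /sqnorm.
    have -> : \sum_i u i 0 * w0 i 0 ^+ 2 = \sum_i w0 i 0 ^+ 2.
      apply: eq_bigr => i _; rewrite mxE.
      by case: (eqVneq (w0 i 0) 0) => [->|H]; [rewrite expr0n mulr0 | rewrite mul1r].
    by [].
  exists (w0, u) => //=; split.
    by move=> i; rewrite mxE; case: (_ != 0); rewrite ?lexx ?ler01.
  have -> : \sum_i u i 0 = (\sum_i ((w0 i 0 != 0)%R : nat))%:R.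
    by rewrite natr_sum; apply: eq_bigr => i _; rewrite mxE.
  by rewrite ler_nat -card_cset.
Qed.
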